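(* For a topological space $X$ the following are equivalent: (1) $X$ is an Alster space; (2) $X$ satisfies ${\sf S}_1(\mathcal{G}_K,\mathcal{G})$; (3) $X$ satisfies ${\sf S}_1(\mathcal{G}_K,\mathcal{G}_{\Omega})$.
   Context: All spaces are infinite ${\sf T}_1$ topological spaces. For a space $X$: $\mathcal{G}_K$ is the family of all collections $\mathcal{U}$ of ${\sf G}_\delta$ subsets of $X$ such that $X\notin\mathcal{U}$ and for each compact $C\subseteq X$ there is $U\in\mathcal{U}$ with $C\subseteq U$. $\mathcal{G}$ is the family of all covers of $X$ by ${\sf G}_\delta$ sets. $\mathcal{G}_\Omega$ is the family of $\mathcal{U}\in\mathcal{G}$ with $X\notin\mathcal{U}$ such that every finite $F\subseteq X$ is contained in some member of $\mathcal{U}$. $X$ is an Alster space if every member of $\mathcal{G}_K$ has a countable subfamily covering $X$. ${\sf S}_1(\mathcal{A},\mathcal{B})$: for each sequence $(A_n:n\in\mathbb{N})$ of elements of $\mathcal{A}$ there are $B_n\in A_n$ with $\{B_n:n\in\mathbb{N}\}\in\mathcal{B}$. *)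

(* Defs.v *)
From Stdlib Require Import List.

Definition set (X : Type) := X -> Prop.
Definition family (X : Type) := set X -> Prop.

Record topology (X : Type) := Topology {
  is_open : set X -> Prop;
  open_full : is_open (fun _ => True);
  open_empty : is_open (fun _ => False);
  open_inter : forall A B, is_open A -> is_open B -> is_open (fun x => A x /\ B x);
  open_union : forall (F : family X), (forall A, F A -> is_open A) ->
                 is_open (fun x => exists A, F A /\ A x)
}.
Arguments is_open {X} t A.

Definition subset {X : Type} (A B : set X) : Prop := forall x, A x -> B x.

Definition T1 {X : Type} (t : topology X) : Prop :=
  forall x y : X, x <> y -> exists U, is_open t U /\ U x /\ ~ U y.

Definition infinite_type (X : Type) : Prop :=
  forall l : list X, exists x, ~ In x l.

Definition compact {X : Type} (t : topology X) (C : set X) : Prop :=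
  forall (F : family X), (forall A, F A -> is_open t A) ->
    subset C (fun x => exists A, F A /\ A x) ->
    exists l : list (set X), (forall A, In A l -> F A) /\
      subset C (fun x => exists A, In A l /\ A x).

Definition Gdelta {X : Type} (t : topology X) (G : set X) : Prop :=
  exists U : nat -> set X, (forall n, is_open t (U n)) /\
    forall x, G x <-> (forall n, U n x).

(* "X is a member of the collection U" (sets compared extensionally) *)
Definition full_in {X : Type} (U : family X) : Prop :=
  exists A, U A /\ forall x : X, A x.

Definition covers {X : Type} (U : family X) : Prop :=
  forall x : X, exists A, U A /\ A x.

Definition GK {X : Type} (t : topology X) (U : family X) : Prop :=
  (forall A, U A -> Gdelta t A) /\ ~ full_in U /\
  forall C, compact t C -> exists A, U A /\ subset C A.

Definition Gcov {X : Type} (t : topology X) (U : family X) : Prop :=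
  (forall A, U A -> Gdelta t A) /\ covers U.

Definition GOmega {X : Type} (t : topology X) (U : family X) : Prop :=
  Gcov t U /\ ~ full_in U /\
  forall F : list X, exists A, U A /\ forall x, In x F -> A x.

Definition Alster {X : Type} (t : topology X) : Prop :=
  forall U : family X, GK t U ->
    exists f : nat -> set X, (forall n, U (f n)) /\ forall x, exists n, f n x.

Definition S1 {X : Type} (A B : family X -> Prop) : Prop :=
  forall Us : nat -> family X, (forall n, A (Us n)) ->
    exists Bs : nat -> set X, (forall n, Us n (Bs n)) /\
      B (fun S => exists n, S = Bs n).

(* Main.v *)
Require Import Defs.
From Stdlib Require Import List Cantor ClassicalEpsilon.

Definition cid' {A : Type} {P : A -> Prop} (H : exists x, P x) : {x | P x} :=
  constructive_indefinite_description P H.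

Lemma Gdelta_inter {X : Type} (t : topology X) (G : nat -> set X) :
  (forall k, Gdelta t (G k)) -> Gdelta t (fun x => forall k, G k x).
Proof.
  intros H.
  set (U := fun k => proj1_sig (cid' (H k))).
  assert (HU : forall k, (forall n, is_open t (U k n)) /\ forall x, G k x <-> forall n, U k n x).
  { intro k. unfold U. destruct (cid' (H k)) as [u Hu]. exact Hu. }
  exists (fun n => let p := Cantor.of_nat n in U (fst p) (snd p)).
  split.
  - intro n. apply HU.
  - intro x. split.
    + intros Hx n. simpl. apply (proj2 (HU _) x). apply Hx.
    + intros Hx k. apply (proj2 (HU k) x). intro n.
      specialize (Hx (Cantor.to_nat (k, n))). cbv zeta in Hx.
      rewrite Cantor.cancel_of_to in Hx. exact Hx.
Qed.

Lemma compact_empty {X : Type} (t : topology X) : compact t (fun _ => False).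
Proof.
  intros F _ _. exists nil. split; [intros A [] | intros x []].
Qed.

Lemma compact_union {X : Type} (t : topology X) (C D : set X) :
  compact t C -> compact t D -> compact t (fun x => C x \/ D x).
Proof.
  intros HC HD F HF Hcov.
  destruct (HC F HF (fun x h => Hcov x (or_introl h))) as [l1 [H1 H1']].
  destruct (HD F HF (fun x h => Hcov x (or_intror h))) as [l2 [H2 H2']].
  exists (l1 ++ l2). split.
  - intros A HA. apply in_app_or in HA. destruct HA; auto.
  - intros x [h|h].
    + destruct (H1' x h) as [A [HA HAx]]. exists A. split; auto. apply in_or_app; auto.
    + destruct (H2' x h) as [A [HA HAx]]. exists A. split; auto. apply in_or_app; auto.
Qed.

Lemma omega_m {X : Type} (t : topology X) : Alster t ->
  forall m (W : family X), GK t W -> exists f : nat -> set X, (forall n, W (f n)) /\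
    forall F : list X, length F <= m -> exists n, forall x, In x F -> f n x.
Proof.
  intros HA m. induction m as [|m IH]; intros W HW.
  - destruct HW as [_ [_ HK]]. destruct (HK _ (compact_empty t)) as [A [HA0 _]].
    exists (fun _ => A). split; auto. intros F HF. exists 0.
    destruct F; [intros x [] | simpl in HF; inversion HF].
  - assert (Hex : forall C : set X, exists f : nat -> set X, compact t C ->
       (forall n, W (f n) /\ subset C (f n)) /\
       forall F : list X, length F <= m -> exists n, forall x, In x F -> f n x).
    { intro C. destruct (classic (compact t C)) as [Hc|Hc].
      - destruct (IH (fun A => W A /\ subset C A)) as [f [Hf1 Hf2]].
        + destruct HW as [HW1 [HW2 HW3]]. split; [|split].
          * intros A [HA1 _]. auto.
          * intros [A [[HA1 _] HA2]]. apply HW2. exists A; auto.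
          * intros D HD. destruct (HW3 _ (compact_union t C D Hc HD)) as [A [HA1 HA2]].
            exists A. split; [split|]; auto; intros x hx; apply HA2; auto.
        + exists f. intros _. split; auto.
      - exists (fun _ _ => True). intro h; contradiction. }
    set (g := fun C => proj1_sig (cid' (Hex C))).
    assert (Hg : forall C, compact t C ->
       (forall n, W (g C n) /\ subset C (g C n)) /\
       forall F : list X, length F <= m -> exists n, forall x, In x F -> g C n x).
    { intro C. unfold g. destruct (cid' (Hex C)) as [f Hf]. exact Hf. }
    set (G := fun B : set X => exists C, compact t C /\ B = fun x => forall n, g C n x).
    assert (HGK : GK t G).
    { destruct HW as [HW1 [HW2 HW3]]. split; [|split].
      - intros B [C [HC ->]]. apply Gdelta_inter. intro k. apply HW1. apply (Hg C HC).
      - intros [B [[C [HC ->]] Hfull]]. apply HW2. exists (g C 0). split.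
        + apply (Hg C HC).
        + intro x. apply Hfull.
      - intros D HD. exists (fun x => forall n, g D n x). split.
        + exists D; auto.
        + intros x hx n. apply (Hg D HD). exact hx. }
    destruct (HA G HGK) as [h [Hh1 Hh2]].
    set (c := fun k => proj1_sig (cid' (Hh1 k))).
    assert (Hc : forall k, compact t (c k) /\ h k = fun x => forall n, g (c k) n x).
    { intro k. unfold c. destruct (cid' (Hh1 k)) as [C HC]. exact HC. }
    exists (fun n => let p := Cantor.of_nat n in g (c (fst p)) (snd p)). split.
    + intro n. apply (Hg _ (proj1 (Hc _))).
    + intros F HF. destruct F as [|x F'].
      * exists 0. intros y [].
      * simpl in HF. assert (HF' : length F' <= m) by (apply le_S_n; exact HF).
        destruct (Hh2 x) as [k Hk].
        destruct (Hc k) as [Hck Heq]. rewrite Heq in Hk.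
        destruct (proj2 (Hg _ Hck) F' HF') as [j Hj].
        exists (Cantor.to_nat (k, j)). cbv zeta. rewrite Cantor.cancel_of_to. simpl.
        intros y [<-|Hy]; auto.
Qed.

Lemma omega_all {X : Type} (t : topology X) : Alster t ->
  forall (W : family X), GK t W -> exists f : nat -> set X, (forall n, W (f n)) /\
    forall F : list X, exists n, forall x, In x F -> f n x.
Proof.
  intros HA W HW.
  set (f := fun m => proj1_sig (cid' (omega_m t HA m W HW))).
  assert (Hf : forall m, (forall n, W (f m n)) /\
    forall F : list X, length F <= m -> exists n, forall x, In x F -> f m n x).
  { intro m. unfold f. destruct (cid' _) as [g Hg]. exact Hg. }
  exists (fun n => let p := Cantor.of_nat n in f (fst p) (snd p)). split.
  - intro n. apply Hf.
  - intro F. destruct (proj2 (Hf (length F)) F (le_n _)) as [j Hj].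
    exists (Cantor.to_nat (length F, j)). cbv zeta. rewrite Cantor.cancel_of_to. exact Hj.
Qed.

Lemma alster_omega {X : Type} (t : topology X) : Alster t -> S1 (GK t) (GOmega t).
Proof.
  intros HA Us HUs.
  set (W := fun A : set X => exists B : nat -> set X, (forall n, Us n (B n)) /\
              forall x, A x <-> forall n, B n x).
  assert (HW : GK t W).
  { split; [|split].
    - intros A [B [HB HAB]].
      assert (Hg : Gdelta t (fun x => forall n, B n x)).
      { apply Gdelta_inter. intro k. apply (proj1 (HUs k)). apply HB. }
      destruct Hg as [U [HU1 HU2]]. exists U. split; auto.
      intro x. rewrite HAB. apply HU2.
    - intros [A [[B [HB HAB]] Hfull]]. apply (proj1 (proj2 (HUs 0))).
      exists (B 0). split; auto. intro x. apply (proj1 (HAB x) (Hfull x)).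
    - intros C HC.
      assert (Hex : forall n, exists A, Us n A /\ subset C A) by
        (intro n; apply (proj2 (proj2 (HUs n))); exact HC).
      set (B := fun n => proj1_sig (cid' (Hex n))).
      assert (HB : forall n, Us n (B n) /\ subset C (B n)).
      { intro n. unfold B. destruct (cid' _) as [A HA']. exact HA'. }
      exists (fun x => forall n, B n x). split.
      + exists B. split; [intro n; apply HB | tauto].
      + intros x hx n. apply (HB n). exact hx. }
  destruct (omega_all t HA W HW) as [f [Hf1 Hf2]].
  set (B := fun k => proj1_sig (cid' (Hf1 k))).
  assert (HB : forall k, (forall n, Us n (B k n)) /\ forall x, f k x <-> forall n, B k n x).
  { intro k. unfold B. destruct (cid' _) as [b Hb]. exact Hb. }
  exists (fun k => B k k). split.
  - intro k. apply HB.
  - assert (Hom : forall F : list X, exists A, (exists n, A = B n n) /\ forall x, In x F -> A x).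
    { intro F. destruct (Hf2 F) as [k Hk]. exists (B k k). split; [eauto|].
      intros x hx. apply (proj1 (proj2 (HB k) x) (Hk x hx)). }
    split; [split|split].
    + intros A [n ->]. apply (proj1 (HUs n)). apply HB.
    + intro x. destruct (Hom (x :: nil)) as [A [HA1 HA2]]. exists A. split; auto.
      apply HA2. left; auto.
    + intros [A [[n ->] Hfull]]. apply (proj1 (proj2 (HUs n))).
      exists (B n n). split; auto. apply HB.
    + exact Hom.
Qed.

Theorem lemma4p3 (X : Type) (t : topology X) :
  T1 t -> infinite_type X ->
  (Alster t <-> S1 (GK t) (Gcov t)) /\
  (S1 (GK t) (Gcov t) <-> S1 (GK t) (GOmega t)).
Proof.
  intros _ _.
  assert (OC : S1 (GK t) (GOmega t) -> S1 (GK t) (Gcov t)).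
  { intros H Us HUs. destruct (H Us HUs) as [Bs [H1 H2]]. exists Bs. split; auto.
    apply H2. }
  assert (CA : S1 (GK t) (Gcov t) -> Alster t).
  { intros H U HU. destruct (H (fun _ => U) (fun _ => HU)) as [Bs [H1 [_ H2]]].
    exists Bs. split; auto. intro x. destruct (H2 x) as [A [[n ->] HA]]. eauto. }
  pose proof (alster_omega t) as AO.
  split; split; auto.
Qed.
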